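(* Let $\nu\in\mathcal P_{2,0}(\mathbb R^d)$ and let $\mathcal D\subset\mathcal P_2(\mathbb R^d)$ be a nonempty, translation invariant cone. Define $$P_1=\sup\Big\{\int\langle x,y\rangle\,d\pi(x,y):\ \mu\in\mathcal D\cap\mathcal P_{2,0}(\mathbb R^d),\ \pi\in\Pi(\mu,\nu),\ \operatorname{Var}(\mu)\le1\Big\}.$$ Suppose $P_1>0$. Then: (a) if $(\hat\mu,\hat\pi)$ attains $P_1$, then $\operatorname{Var}(\hat\mu)=1$ and the dilation $(P_1)_\#\hat\mu$ maximizes $\operatorname{Var}$ over $\mathcal D\cap\mathcal M^K_\nu$; (b) conversely, if $\check\mu\ne\delta_0$ maximizes $\operatorname{Var}$ over $\mathcal D\cap\mathcal M^K_\nu$ and $\check\pi\in\operatorname{argmax}_{\pi\in\Pi(\check\mu,\nu)}\int\langle x,y\rangle d\pi$, then with $\check\lambda=\operatorname{Var}(\check\mu)^{-1/2}$ the pair $(\check\lambda_\#\check\mu,(\check\lambda\times\mathrm{id})_\#\check\pi)$ attains $P_1$. Moreover, $P_1=0$ if and only if the maximal value of $\operatorname{Var}$ over $\mathcal D\cap\mathcal M^K_\nu$ is $0$, in which case $\delta_0$ is a maximizer.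
   Context: $\mathcal P_2(\mathbb R^d)$: Borel probability measures with finite second moment; $\mathcal P_{2,0}$: those with zero mean. $\Pi(\mu,\nu)$: couplings. $\operatorname{Var}(\mu)=\int|x-\int z\,d\mu|^2d\mu$. Kantorovich dominance: $\mu\preceq_K\nu$ iff there is $\pi\in\Pi(\mu,\nu)$ with $\int\langle x-b_\nu,y-x\rangle\,d\pi=0$, $b_\nu=\int y\,d\nu$; $\mathcal M^K_\nu=\{\mu\in\mathcal P_2(\mathbb R^d):\mu\preceq_K\nu\}$. For $\lambda\in\mathbb R$, $\lambda_\#\mu$ is the law of $\lambda X$, $X\sim\mu$, and $(\lambda\times\mathrm{id})(x,y)=(\lambda x,y)$. $\mathcal D$ is a cone if $\lambda_\#\mu\in\mathcal D$ for all $\mu\in\mathcal D,\lambda\ge0$; translation invariant if $(T_k)_\#\mu\in\mathcal D$ for all $\mu\in\mathcal D$, $k\in\mathbb R^d$, $T_k(x)=x+k$. *)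

(* Defs.v *)
(* R^d is modelled as row vectors 'rV[R]_d with
   the Borel sigma-algebra (generated by the open sets). *)
From HB Require Import structures.
From mathcomp Require Import all_boot all_order all_algebra.
From mathcomp Require Import all_classical all_reals all_analysis.
Set Implicit Arguments. Unset Strict Implicit. Unset Printing Implicit Defensive.
Import Order.TTheory GRing.Theory Num.Theory numFieldNormedType.Exports.
Local Open Scope classical_set_scope.
Local Open Scope ring_scope.

Notation Rd R d :=
  (g_sigma_algebraType (@open ('M[R]_(1, d) : topologicalType))).

Section Defs.
Variables (R : realType) (d : nat).

Definition dotp (x y : 'rV[R]_d) : R := \sum_(i < d) x ord0 i * y ord0 i.
Definition sqnorm (x : 'rV[R]_d) : R := dotp x x.

Definition P2 (mu : probability (Rd R d) R) : Prop :=
  mu.-integrable setT (fun x : (Rd R d) => (sqnorm x)%:E).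

Definition mean (mu : probability (Rd R d) R) : 'rV[R]_d :=
  \row_(i < d) Rintegral mu setT (fun x : (Rd R d) => (x : 'rV[R]_d) ord0 i).

Definition P20 (mu : probability (Rd R d) R) : Prop := P2 mu /\ mean mu = 0.

Definition Var (mu : probability (Rd R d) R) : R :=
  Rintegral mu setT (fun x : (Rd R d) => sqnorm ((x : 'rV[R]_d) - mean mu)).

Definition coupling (mu nu : probability (Rd R d) R)
    (pi : probability ((Rd R d) * (Rd R d))%type R) : Prop :=
  forall A : set (Rd R d), measurable A ->
    pi (A `*` setT) = mu A /\ pi (setT `*` A) = nu A.

Definition corr (pi : probability ((Rd R d) * (Rd R d))%type R) : R :=
  Rintegral pi setT (fun z : (Rd R d) * (Rd R d) => dotp z.1 z.2).

Definition Kdom (mu nu : probability (Rd R d) R) : Prop :=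
  exists pi, coupling mu nu pi /\
    Rintegral pi setT
      (fun z : (Rd R d) * (Rd R d) => dotp ((z.1 : 'rV[R]_d) - mean nu)
                               ((z.2 : 'rV[R]_d) - z.1)) = 0.
Definition MK (nu : probability (Rd R d) R) : set (probability (Rd R d) R) :=
  [set mu | P2 mu /\ Kdom mu nu].

Definition is_push (f : (Rd R d) -> (Rd R d)) (mu rho : probability (Rd R d) R) : Prop :=
  forall A : set (Rd R d), measurable A -> rho A = mu (f @^-1` A).
Definition is_push2 (f : (Rd R d) * (Rd R d) -> (Rd R d) * (Rd R d))
    (pi gam : probability ((Rd R d) * (Rd R d))%type R) : Prop :=
  forall A : set ((Rd R d) * (Rd R d)), measurable A -> gam A = pi (f @^-1` A).

Definition dil (lam : R) : (Rd R d) -> (Rd R d) := fun x => lam *: (x : 'rV[R]_d).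
Definition transl (k : 'rV[R]_d) : (Rd R d) -> (Rd R d) := fun x => (x : 'rV[R]_d) + k.

Definition is_cone (D : set (probability (Rd R d) R)) : Prop :=
  forall mu rho, D mu -> forall lam : R, 0 <= lam ->
    is_push (dil lam) mu rho -> D rho.
Definition transl_invariant (D : set (probability (Rd R d) R)) : Prop :=
  forall mu rho, D mu -> forall k : 'rV[R]_d,
    is_push (transl k) mu rho -> D rho.

Definition is_delta0 (rho : probability (Rd R d) R) : Prop :=
  forall A : set (Rd R d), measurable A -> rho A = \d_(0 : (Rd R d)) A.

Definition feasible1 (D : set (probability (Rd R d) R)) (nu : probability (Rd R d) R)
    (mu : probability (Rd R d) R) (pi : probability ((Rd R d) * (Rd R d))%type R) : Prop :=
  D mu /\ P20 mu /\ coupling mu nu pi /\ Var mu <= 1.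

Definition P1 (D : set (probability (Rd R d) R)) (nu : probability (Rd R d) R) : \bar R :=
  ereal_sup [set (corr pi)%:E | pi in
    [set pi | exists mu, feasible1 D nu mu pi]].

Definition attainsP1 D nu mu pi : Prop :=
  feasible1 D nu mu pi /\ (corr pi)%:E = P1 D nu.

Definition maxVar (D : set (probability (Rd R d) R)) (nu : probability (Rd R d) R)
    (rho : probability (Rd R d) R) : Prop :=
  (D `&` MK nu) rho /\ forall mu, (D `&` MK nu) mu -> Var mu <= Var rho.

End Defs.

(* Main.v *)
Require Import Defs.
From HB Require Import structures.
From mathcomp Require Import all_boot all_order all_algebra.
From mathcomp Require Import all_classical all_reals all_analysis.
From mathcomp Require Import ring lra measurable_realfun.
Set Implicit Arguments. Unset Strict Implicit. Unset Printing Implicit Defensive.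
Import Order.TTheory GRing.Theory Num.Theory numFieldNormedType.Exports.
Local Open Scope classical_set_scope.
Local Open Scope ring_scope.


Section Alg.
Variables (R : realType) (d : nat).
Implicit Types x y z : 'rV[R]_d.

Lemma dotpC x y : dotp x y = dotp y x.
Proof. by apply: eq_bigr => i _; rewrite mulrC. Qed.
Lemma dotpDl x y z : dotp (x + y) z = dotp x z + dotp y z.
Proof. by rewrite /dotp -big_split; apply: eq_bigr => i _; rewrite mxE mulrDl. Qed.
Lemma dotpNl x z : dotp (- x) z = - dotp x z.
Proof. by rewrite /dotp -sumrN; apply: eq_bigr => i _; rewrite mxE mulNr. Qed.
Lemma dotpBl x y z : dotp (x - y) z = dotp x z - dotp y z.
Proof. by rewrite dotpDl dotpNl. Qed.
Lemma dotpZl a x z : dotp (a *: x) z = a * dotp x z.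
Proof. by rewrite /dotp mulr_sumr; apply: eq_bigr => i _; rewrite mxE mulrA. Qed.
Lemma dotpDr x y z : dotp z (x + y) = dotp z x + dotp z y.
Proof. by rewrite dotpC dotpDl !(dotpC z). Qed.
Lemma dotpBr x y z : dotp z (x - y) = dotp z x - dotp z y.
Proof. by rewrite dotpC dotpBl !(dotpC z). Qed.
Lemma dotpZr a x z : dotp z (a *: x) = a * dotp z x.
Proof. by rewrite dotpC dotpZl dotpC. Qed.
Lemma dotp0l z : dotp 0 z = 0.
Proof. by rewrite /dotp big1 // => i _; rewrite mxE mul0r. Qed.
Lemma dotp0r z : dotp z 0 = 0.
Proof. by rewrite dotpC dotp0l. Qed.
Lemma sqnorm_ge0 x : 0 <= sqnorm x.
Proof. by rewrite /sqnorm /dotp sumr_ge0 // => i _; rewrite -expr2 sqr_ge0. Qed.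
Lemma sqnorm_eq0 x : sqnorm x = 0 -> x = 0.
Proof.
move=> /eqP; rewrite /sqnorm /dotp psumr_eq0 => [/allP H|i _]; last first.
  by rewrite -expr2 sqr_ge0.
apply/rowP => i; rewrite mxE; apply/eqP.
by have := H i (mem_index_enum _); rewrite /= mulf_eq0 orbb.
Qed.
Lemma sqnormD x y : sqnorm (x + y) = sqnorm x + 2 * dotp x y + sqnorm y.
Proof. rewrite /sqnorm dotpDl !dotpDr (dotpC y x); ring. Qed.
Lemma sqnormB x y : sqnorm (x - y) = sqnorm x - 2 * dotp x y + sqnorm y.
Proof. rewrite /sqnorm dotpBl !dotpBr (dotpC y x); ring. Qed.
Lemma sqnormZ a x : sqnorm (a *: x) = a ^+ 2 * sqnorm x.
Proof. by rewrite /sqnorm dotpZl dotpZr mulrA expr2. Qed.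
Lemma amgm x y s : 0 < s -> 2 * dotp x y <= s * sqnorm x + s^-1 * sqnorm y.
Proof.
move=> s0; have := sqnorm_ge0 (x - s^-1 *: y).
rewrite sqnormB sqnormZ dotpZr => h.
have := mulr_ge0 (ltW s0) h.
suff -> : s * (sqnorm x - 2 * (s^-1 * dotp x y) + s^-1 ^+ 2 * sqnorm y) =
  s * sqnorm x + s^-1 * sqnorm y - 2 * dotp x y by rewrite subr_ge0.
field; exact: lt0r_neq0.
Qed.
Lemma absdotp x y : `|dotp x y| <= sqnorm x + sqnorm y.
Proof.
have h1 := @amgm x y 1 ltr01; have h2 := @amgm (- x) y 1 ltr01.
have E : sqnorm (- x) = sqnorm x by rewrite /sqnorm dotpNl dotpC dotpNl opprK.
rewrite E dotpNl invr1 !mul1r in h2; rewrite invr1 !mul1r in h1.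
rewrite ler_norml; apply/andP; split; lra.
Qed.
End Alg.


Section S.
Variables (R : realType) (d : nat).
Local Notation T := (Rd R d).

Lemma cont_mfun (f : 'M[R]_(1,d) -> R) : continuous f ->
  measurable_fun [set: T] (f : T -> R).
Proof.
move=> /continuousP cf; apply: (measurability _ (measurable_realfun.RGenOpens.measurableE R)).
move=> _ [_ [a [b ->]] <-]; apply: sub_sigma_algebra; rewrite setTI.
exact/cf/interval_open.
Qed.

Lemma cont_mfunT (f : 'M[R]_(1,d) -> 'M[R]_(1,d)) : continuous f ->
  measurable_fun [set: T] (f : T -> T).
Proof.
move=> /continuousP cf.
have mE : @measurable _ T = <<s (@open 'M[R]_(1,d)) >> by [].
apply: (measurability _ mE).
move=> _ [A oA <-]; apply: sub_sigma_algebra; rewrite setTI.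
exact/cf.
Qed.


Lemma mcoord (i : 'I_d) : measurable_fun [set: T] (fun x : T => (x : 'rV[R]_d) ord0 i).
Proof. apply: cont_mfun; exact: coord_continuous. Qed.

Definition mrow dX (X : measurableType dX) (f : X -> 'rV[R]_d) :=
  forall i, measurable_fun [set: X] (fun x => f x ord0 i).

Lemma mrow_dotp dX (X : measurableType dX) (f g : X -> 'rV[R]_d) :
  mrow f -> mrow g -> measurable_fun setT (fun x : X => dotp (f x) (g x)).
Proof. by move=> mf mg; apply: measurable_sum => i; exact: measurable_funM. Qed.

Lemma mrowD dX (X : measurableType dX) (f g : X -> 'rV[R]_d) :
  mrow f -> mrow g -> mrow (fun x => f x + g x).
Proof.
move=> mf mg i; rewrite /=.
have -> : (fun x => (f x + g x) ord0 i) = (fun x => f x ord0 i) \+ (fun x => g x ord0 i).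
  by apply/funext => x; rewrite mxE.
exact: measurable_funD.
Qed.

Lemma mrowN dX (X : measurableType dX) (f : X -> 'rV[R]_d) :
  mrow f -> mrow (fun x => - f x).
Proof.
move=> mf i.
have -> : (fun x => (- f x) ord0 i) = \- (fun x => f x ord0 i).
  by apply/funext => x; rewrite mxE.
exact: measurable_funN.
Qed.

Lemma mrowB dX (X : measurableType dX) (f g : X -> 'rV[R]_d) :
  mrow f -> mrow g -> mrow (fun x => f x - g x).
Proof. by move=> mf mg; apply: mrowD => //; exact: mrowN. Qed.

Lemma mrowZ dX (X : measurableType dX) (f : X -> 'rV[R]_d) a :
  mrow f -> mrow (fun x => a *: f x).
Proof.
move=> mf i.
have -> : (fun x => (a *: f x) ord0 i) = (fun x => a) \* (fun x => f x ord0 i).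
  by apply/funext => x; rewrite mxE.
exact: measurable_funM.
Qed.

Lemma mrow_cst dX (X : measurableType dX) (k : 'rV[R]_d) : mrow (fun _ : X => k).
Proof. by move=> i; exact: measurable_cst. Qed.

Lemma mrow_comp dX (X : measurableType dX) (h : X -> T) :
  measurable_fun setT h -> mrow (fun x => (h x : 'rV[R]_d)).
Proof. by move=> mh i; exact: (measurableT_comp (mcoord i) mh). Qed.

Lemma mrow_id : mrow (fun x : T => (x : 'rV[R]_d)).
Proof. exact: mcoord. Qed.

Lemma mrow_fst : mrow (fun z : (T * T)%type => (z.1 : 'rV[R]_d)).
Proof. exact: mrow_comp measurable_fst. Qed.
Lemma mrow_snd : mrow (fun z : (T * T)%type => (z.2 : 'rV[R]_d)).
Proof. exact: mrow_comp measurable_snd. Qed.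

Lemma mdil (t : R) : measurable_fun [set: T] (dil t).
Proof.
exact: (@cont_mfunT (fun x => t *: x) (@scaler_continuous _ _ t)).
Qed.
Lemma mtransl k : measurable_fun [set: T] (transl k).
Proof.
apply: (@cont_mfunT (fun x => x + k)) => x.
apply: continuousD; [exact: cvg_id|exact: cst_continuous].
Qed.

End S.

Section Int.
Variables (R : realType).
Context dX (X : measurableType dX).
Implicit Types P : probability X R.

Lemma int_dom P (f h : X -> R) c : measurable_fun setT f ->
  P.-integrable setT (EFin \o h) -> (forall x, `|f x| <= h x + c) ->
  P.-integrable setT (EFin \o f).
Proof.
move=> mf ih fh.
have ihc : P.-integrable setT ((EFin \o h) \+ (EFin \o cst c)).
  by apply: integrableD => //; exact: finite_measure_integrable_cst.
apply: (le_integrable _ _ _ ihc) => //; first exact/measurable_EFinP.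
move=> x _ /=; rewrite /= lee_fin (le_trans (fh x))//.
exact: ler_norm.
Qed.

Lemma Rint_sum P (I : eqType) (s : seq I) (f : I -> X -> R) :
  (forall i, P.-integrable setT (EFin \o f i)) ->
  Rintegral P setT (fun x => \sum_(i <- s) f i x) = \sum_(i <- s) Rintegral P setT (f i).
Proof.
move=> fi; elim: s => [|a s IH].
  rewrite big_nil.
  under eq_Rintegral do rewrite big_nil.
  by rewrite Rintegral_cst// mul0r.
rewrite big_cons -IH -RintegralD //.
  by apply: eq_Rintegral => x _; rewrite big_cons.
have -> : EFin \o (fun x => \sum_(i <- s) f i x) = (fun x => \sum_(i <- s) (EFin \o f i) x).
  by apply/funext => x /=; rewrite sumEFin.
by apply: integrable_sum.
Qed.

End Int.


Section Push.
Variable R : realType.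
Context d1 d2 (X : measurableType d1) (Y : measurableType d2).

Definition ispush (f : X -> Y) (mu : set X -> \bar R) (rho : set Y -> \bar R) :=
  forall A, measurable A -> rho A = mu (f @^-1` A).

Definition mkmf (f : X -> Y) (mf : measurable_fun setT f) : {mfun X >-> Y} :=
  HB.pack f (isMeasurableFun.Build _ _ _ _ f mf).

Definition pushP (P : probability X R) (f : X -> Y) (mf : measurable_fun setT f)
  : probability Y R := distribution P (mkmf mf).

Lemma pushP_is (P : probability X R) (f : X -> Y) (mf : measurable_fun setT f) :
  ispush f P (pushP P mf).
Proof. by []. Qed.

Variables (f : X -> Y) (mf : measurable_fun setT f).
Variables (mu : {measure set X -> \bar R}) (rho : {measure set Y -> \bar R}).
Hypothesis hp : ispush f mu rho.

Lemma push_abs (g : Y -> R) : measurable_fun setT g ->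
  (\int[rho]_y `|(g y)%:E| = \int[mu]_x `|(g (f x))%:E|)%E.
Proof.
move=> mg.
rewrite (@eq_measure_integral _ _ _ _ (pushforward mu f)); last first.
  by move=> A mA _; exact: hp.
rewrite ge0_integral_pushforward //.
by apply: measurableT_comp => //; exact/measurable_EFinP.
Qed.

Lemma push_intg (g : Y -> R) : measurable_fun setT g ->
  rho.-integrable setT (EFin \o g) <-> mu.-integrable setT (EFin \o (g \o f)).
Proof.
move=> mg; split => /integrableP [_ h]; apply/integrableP; split.
- by apply/measurable_EFinP; exact: measurableT_comp.
- by rewrite -push_abs.
- exact/measurable_EFinP.
- by rewrite push_abs.
Qed.

Lemma push_Rint (g : Y -> R) : measurable_fun setT g ->
  mu.-integrable setT (EFin \o (g \o f)) ->
  Rintegral rho setT g = Rintegral mu setT (g \o f).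
Proof.
move=> mg ig; rewrite /Rintegral; congr fine.
rewrite (@eq_measure_integral _ _ _ _ (pushforward mu f)); last first.
  by move=> A mA _; exact: hp.
rewrite integral_pushforward //; exact/measurable_EFinP.
Qed.

End Push.



Section Help.
Variable R : realType.
Context dX (X : measurableType dX) (m : {measure set X -> \bar R}).
Implicit Types f g : X -> R.

Lemma eqI (f g : X -> \bar R) : m.-integrable setT f -> (forall x, f x = g x) ->
  m.-integrable setT g.
Proof. by move=> h fg; apply: (eq_integrable measurableT f) => // x _; exact: fg. Qed.

Lemma intZ f a : m.-integrable setT (EFin \o f) ->
  m.-integrable setT (EFin \o (fun x => a * f x)).
Proof. by move=> h; apply: eqI (integrableZl measurableT a h) _ => x /=; rewrite EFinM. Qed.

Lemma intD f g : m.-integrable setT (EFin \o f) -> m.-integrable setT (EFin \o g) ->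
  m.-integrable setT (EFin \o (fun x => f x + g x)).
Proof. by move=> hf hg; apply: eqI (integrableD measurableT hf hg) _ => x /=; rewrite EFinD. Qed.

Lemma intB f g : m.-integrable setT (EFin \o f) -> m.-integrable setT (EFin \o g) ->
  m.-integrable setT (EFin \o (fun x => f x - g x)).
Proof. by move=> hf hg; apply: eqI (integrableB measurableT hf hg) _ => x /=; rewrite EFinB. Qed.

Lemma intE f g : m.-integrable setT (EFin \o f) -> (forall x, f x = g x) ->
  m.-integrable setT (EFin \o g).
Proof. by move=> h fg; apply: eqI h _ => x /=; rewrite fg. Qed.

End Help.

Section Main.
Variables (R : realType) (d : nat).
Local Notation T := (Rd R d).
Local Notation T2 := (T * T)%type.
Local Notation V := ('rV[R]_d).
Implicit Types (mu nu rho : probability T R) (pi gam : probability T2 R).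

Lemma coupling_fst mu nu pi : coupling mu nu pi -> ispush fst pi mu.
Proof.
move=> hc A mA; have [<- _] := hc A mA; congr (pi _).
by apply/seteqP; split => z /=; [move=> [] | move=> Az; split].
Qed.

Lemma coupling_snd mu nu pi : coupling mu nu pi -> ispush snd pi nu.
Proof.
move=> hc A mA; have [_ <-] := hc A mA; congr (pi _).
by apply/seteqP; split => z /=; [move=> [] | move=> Az; split].
Qed.

Lemma msq : measurable_fun [set: T] (fun x : T => sqnorm (x : V)).
Proof. by rewrite /sqnorm; apply: mrow_dotp; exact: mrow_id. Qed.

Lemma int_domP mu (f : T -> R) a c : P2 mu -> measurable_fun setT f ->
  (forall x : T, `|f x| <= a * sqnorm (x : V) + c) ->
  mu.-integrable setT (EFin \o f).
Proof.
move=> p2 mf fh; apply: (int_dom (h := fun x : T => a * sqnorm (x : V))) mf _ fh.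
exact: (integrableZl measurableT a p2).
Qed.

Lemma abs_coord (x : V) i : `|x ord0 i| <= 1 * sqnorm x + 1.
Proof.
rewrite mul1r /sqnorm /dotp (bigD1 i) //=.
have h : 0 <= \sum_(j < d | j != i) x ord0 j * x ord0 j.
  by apply: sumr_ge0 => j _; rewrite -expr2 sqr_ge0.
set a := x ord0 i; have : `|a| <= a * a + 1.
  case: (lerP 0 a) => a0; [rewrite ger0_norm //|rewrite ltr0_norm //]; nra.
lra.
Qed.

Lemma int_coord mu i : P2 mu -> mu.-integrable setT (EFin \o (fun x : T => (x : V) ord0 i)).
Proof. by move=> p2; apply: (int_domP (a:=1) (c:=1) p2 (@mcoord R d i)) => x; exact: abs_coord. Qed.

Lemma int_dotk mu (k : V) : P2 mu -> mu.-integrable setT (EFin \o (fun x : T => dotp (x : V) k)).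
Proof.
move=> p2; apply: (int_domP (a := 1) (c := sqnorm k)) p2 _ _.
  by apply: mrow_dotp; [exact: mrow_id|exact: mrow_cst].
by move=> x; rewrite mul1r; exact: absdotp.
Qed.

Lemma int_sqB mu (k : V) : P2 mu -> mu.-integrable setT (EFin \o (fun x : T => sqnorm ((x : V) - k))).
Proof.
move=> p2; apply: (int_domP (a := 3) (c := 3 * sqnorm k)) p2 _ _.
  by rewrite /sqnorm; apply: mrow_dotp; (apply: mrowB; [exact: mrow_id|exact: mrow_cst]).
move=> x; rewrite ger0_norm ?sqnorm_ge0 // sqnormB.
have := absdotp x k; have := sqnorm_ge0 x; have := sqnorm_ge0 k.
rewrite ler_norml => ? ? /andP[? ?]; lra.
Qed.

Lemma int_sqD mu (k : V) : P2 mu -> mu.-integrable setT (EFin \o (fun x : T => sqnorm ((x : V) + k))).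
Proof.
move=> p2; apply: (int_domP (a := 3) (c := 3 * sqnorm k)) p2 _ _.
  by rewrite /sqnorm; apply: mrow_dotp; (apply: mrowD; [exact: mrow_id|exact: mrow_cst]).
move=> x; rewrite ger0_norm ?sqnorm_ge0 // sqnormD.
have := absdotp x k; have := sqnorm_ge0 x; have := sqnorm_ge0 k.
rewrite ler_norml => ? ? /andP[? ?]; lra.
Qed.

Lemma Rint1 mu : Rintegral mu setT (fun _ : T => 1) = 1.
Proof.
rewrite Rintegral_cst // (_ : fine _ = 1) ?mul1r //.
by rewrite -[1]/(fine 1%:E); congr fine; exact: probability_setT.
Qed.

Lemma Rint_cst mu (c : R) : Rintegral mu setT (fun _ : T => c) = c.
Proof.
rewrite Rintegral_cst // (_ : fine _ = 1) ?mulr1 //.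
by rewrite -[1]/(fine 1%:E); congr fine; exact: probability_setT.
Qed.

Lemma mean_dot mu (k : V) : P2 mu ->
  Rintegral mu setT (fun x : T => dotp (x : V) k) = dotp (mean mu) k.
Proof.
move=> p2; rewrite /dotp /= Rint_sum; last first.
  move=> i; apply: intE (intZ (k ord0 i) (int_coord i p2)) _ => x; exact: mulrC.
apply: eq_bigr => i _; rewrite RintegralZr ?mxE //; exact: int_coord.
Qed.

Definition M2 mu := Rintegral mu setT (fun x : T => sqnorm (x : V)).

Lemma Var_M2 mu : P2 mu -> Var mu = M2 mu - sqnorm (mean mu).
Proof.
move=> p2; rewrite /Var.
under eq_Rintegral do rewrite sqnormB.
rewrite RintegralD //; last 2 first.
- by apply: intB => //; apply: intZ; exact: int_dotk.
- exact: finite_measure_integrable_cst.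
rewrite RintegralB //; last by apply: intZ; exact: int_dotk.
rewrite RintegralZl; last by [|exact: int_dotk].
rewrite mean_dot // Rint_cst /M2 /sqnorm; first ring.
exact: measurableT.
Qed.


Lemma mpairf (f : T -> T) : measurable_fun setT f ->
  measurable_fun [set: T2] (fun z : T2 => (f z.1, z.2)).
Proof.
move=> mf; apply: measurable_fun_pair => //.
exact: measurableT_comp mf measurable_fst.
Qed.

Lemma dil_P2 mu t rho : P2 mu -> is_push (dil t) mu rho -> P2 rho.
Proof.
move=> p2 hp; apply/(push_intg (mdil t) hp msq).
by apply: intE (intZ (t ^+ 2) p2) _ => x /=; rewrite /dil sqnormZ.
Qed.

Lemma dil_mean mu t rho : P2 mu -> is_push (dil t) mu rho -> mean rho = t *: mean mu.
Proof.
move=> p2 hp; apply/rowP => i; rewrite !mxE.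
rewrite (push_Rint (mdil t) hp (@mcoord R d i)); last first.
  by apply: intE (intZ t (int_coord i p2)) _ => x /=; rewrite /dil mxE.
rewrite -RintegralZl //; last exact: int_coord.
by apply: eq_Rintegral => x _ /=; rewrite /dil mxE.
Qed.

Lemma dil_Var mu t rho : P2 mu -> is_push (dil t) mu rho -> Var rho = t ^+ 2 * Var mu.
Proof.
move=> p2 hp; rewrite /Var (dil_mean p2 hp).
have mg : measurable_fun [set: T] (fun x : T => sqnorm ((x : V) - t *: mean mu)).
  by rewrite /sqnorm; apply: mrow_dotp; (apply: mrowB; [exact: mrow_id|exact: mrow_cst]).
rewrite (push_Rint (mdil t) hp mg); last first.
  apply: intE (intZ (t ^+ 2) (int_sqB (mean mu) p2)) _ => x /=.
  by rewrite /dil -scalerBr sqnormZ.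
rewrite -RintegralZl //; last exact: int_sqB.
by apply: eq_Rintegral => x _ /=; rewrite /dil -scalerBr sqnormZ.
Qed.

Lemma transl_P2 mu k rho : P2 mu -> is_push (transl k) mu rho -> P2 rho.
Proof.
move=> p2 hp; apply/(push_intg (mtransl k) hp msq).
exact: int_sqD.
Qed.

Lemma transl_mean mu k rho : P2 mu -> is_push (transl k) mu rho ->
  mean rho = mean mu + k.
Proof.
move=> p2 hp; apply/rowP => i; rewrite !mxE.
rewrite (push_Rint (mtransl k) hp (@mcoord R d i)); last first.
  apply: intE (intD (int_coord i p2) (finite_measure_integrable_cst _ (k ord0 i) measurableT)) _.
  by move=> x /=; rewrite /transl mxE.
rewrite -[k ord0 i](Rint_cst mu) -RintegralD //; last 2 first.
- exact: int_coord.
- exact: finite_measure_integrable_cst.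
by apply: eq_Rintegral => x _ /=; rewrite /transl mxE.
Qed.

Lemma transl_Var mu k rho : P2 mu -> is_push (transl k) mu rho -> Var rho = Var mu.
Proof.
move=> p2 hp; rewrite /Var (transl_mean p2 hp).
have mg : measurable_fun [set: T] (fun x : T => sqnorm ((x : V) - (mean mu + k))).
  by rewrite /sqnorm; apply: mrow_dotp; (apply: mrowB; [exact: mrow_id|exact: mrow_cst]).
rewrite (push_Rint (mtransl k) hp mg); last first.
  apply: intE (int_sqB (mean mu) p2) _ => x /=.
  by rewrite /transl opprD addrACA subrr addr0.
by apply: eq_Rintegral => x _ /=; rewrite /transl opprD addrACA subrr addr0.
Qed.

Lemma couple_push (f : T -> T) (mf : measurable_fun setT f) mu nu pi rho gam :
  coupling mu nu pi -> is_push f mu rho ->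
  is_push2 (fun z : T2 => (f z.1, z.2)) pi gam -> coupling rho nu gam.
Proof.
move=> hc hr hg A mA; split.
- rewrite hg; last exact: measurableX.
  have mfA : measurable (f @^-1` A) by have := mf measurableT A mA; rewrite setTI.
  by rewrite (hr A mA); have [<- _] := hc _ mfA; congr (pi _).
- rewrite hg; last exact: measurableX.
  by have [_ <-] := hc _ mA; congr (pi _).
Qed.

Lemma mdot12 : measurable_fun [set: T2] (fun z : T2 => dotp (z.1 : V) (z.2 : V)).
Proof. by apply: mrow_dotp; [exact: mrow_fst|exact: mrow_snd]. Qed.

Lemma int_fst mu nu pi (g : T -> R) : coupling mu nu pi -> measurable_fun setT g ->
  mu.-integrable setT (EFin \o g) -> pi.-integrable setT (EFin \o (g \o fst)).
Proof. by move=> hc mg ig; apply/(push_intg measurable_fst (coupling_fst hc) mg). Qed.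

Lemma int_snd mu nu pi (g : T -> R) : coupling mu nu pi -> measurable_fun setT g ->
  nu.-integrable setT (EFin \o g) -> pi.-integrable setT (EFin \o (g \o snd)).
Proof. by move=> hc mg ig; apply/(push_intg measurable_snd (coupling_snd hc) mg). Qed.

Lemma Rint_fst mu nu pi (g : T -> R) : coupling mu nu pi -> measurable_fun setT g ->
  mu.-integrable setT (EFin \o g) ->
  Rintegral pi setT (g \o fst) = Rintegral mu setT g.
Proof.
move=> hc mg ig; rewrite (push_Rint measurable_fst (coupling_fst hc) mg) //.
exact: int_fst hc mg ig.
Qed.

Lemma Rint_snd mu nu pi (g : T -> R) : coupling mu nu pi -> measurable_fun setT g ->
  nu.-integrable setT (EFin \o g) ->
  Rintegral pi setT (g \o snd) = Rintegral nu setT g.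
Proof.
move=> hc mg ig; rewrite (push_Rint measurable_snd (coupling_snd hc) mg) //.
exact: int_snd hc mg ig.
Qed.

Lemma int_sq1 mu nu pi : coupling mu nu pi -> P2 mu ->
  pi.-integrable setT (EFin \o (fun z : T2 => sqnorm (z.1 : V))).
Proof. by move=> hc p2; exact: (int_fst hc msq p2). Qed.

Lemma int_sq2 mu nu pi : coupling mu nu pi -> P2 nu ->
  pi.-integrable setT (EFin \o (fun z : T2 => sqnorm (z.2 : V))).
Proof. by move=> hc p2; exact: (int_snd hc msq p2). Qed.

Lemma int_corr mu nu pi : coupling mu nu pi -> P2 mu -> P2 nu ->
  pi.-integrable setT (EFin \o (fun z : T2 => dotp (z.1 : V) (z.2 : V))).
Proof.
move=> hc p1 p2; apply: (int_dom (c := 0) mdot12 (intD (int_sq1 hc p1) (int_sq2 hc p2))).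
by move=> z; rewrite addr0; exact: absdotp.
Qed.


Lemma corr_dil mu nu pi t gam : coupling mu nu pi -> P2 mu -> P2 nu ->
  is_push2 (fun z : T2 => (dil t z.1, z.2)) pi gam -> corr gam = t * corr pi.
Proof.
move=> hc p1 p2 hg; have ic := int_corr hc p1 p2.
rewrite /corr (push_Rint (mpairf (mdil t)) hg mdot12); last first.
  by apply: intE (intZ t ic) _ => z /=; rewrite /dil dotpZl.
rewrite -RintegralZl //.
by apply: eq_Rintegral => z _ /=; rewrite /dil dotpZl.
Qed.

Lemma mean_dot_snd mu nu pi (k : V) : coupling mu nu pi -> P2 nu ->
  Rintegral pi setT (fun z : T2 => dotp k (z.2 : V)) = dotp k (mean nu).
Proof.
move=> hc p2; have mg : measurable_fun [set: T] (fun x : T => dotp (x : V) k).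
  by apply: mrow_dotp; [exact: mrow_id|exact: mrow_cst].
rewrite dotpC -mean_dot // -(Rint_snd hc mg (int_dotk k p2)).
by apply: eq_Rintegral => z _ /=; rewrite dotpC.
Qed.

Lemma corr_transl mu nu pi k gam : coupling mu nu pi -> P2 mu -> P2 nu ->
  is_push2 (fun z : T2 => (transl k z.1, z.2)) pi gam ->
  corr gam = corr pi + dotp k (mean nu).
Proof.
move=> hc p1 p2 hg; have ic := int_corr hc p1 p2.
have ik : pi.-integrable setT (EFin \o (fun z : T2 => dotp k (z.2 : V))).
  apply: intE (int_snd hc _ (int_dotk k p2)) _ => [|z /=]; last by rewrite dotpC.
  by apply: mrow_dotp; [exact: mrow_id|exact: mrow_cst].
rewrite /corr (push_Rint (mpairf (mtransl k)) hg mdot12); last first.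
  by apply: intE (intD (int_corr hc p1 p2) ik) _ => z /=; rewrite /transl dotpDl.
rewrite -(mean_dot_snd k hc p2) -RintegralD //.
by apply: eq_Rintegral => z _ /=; rewrite /transl dotpDl.
Qed.

Lemma kint mu nu pi : coupling mu nu pi -> P2 mu -> P2 nu -> mean nu = 0 ->
  Rintegral pi setT (fun z : T2 => dotp ((z.1 : V) - mean nu) ((z.2 : V) - z.1))
  = corr pi - M2 mu.
Proof.
move=> hc p1 p2 m0; rewrite m0.
have ic := int_corr hc p1 p2; have i1 := int_sq1 hc p1.
under eq_Rintegral do rewrite subr0 dotpBr.
rewrite RintegralB //.
by rewrite /M2 -(Rint_fst hc msq p1).
Qed.

Lemma corr_amgm mu nu pi s : coupling mu nu pi -> P2 mu -> P2 nu -> 0 < s ->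
  2 * corr pi <= s * M2 mu + s^-1 * M2 nu.
Proof.
move=> hc p1 p2 s0.
have i1 := int_sq1 hc p1; have i2 := int_sq2 hc p2; have ic := int_corr hc p1 p2.
have j1 := intZ s i1; have j2 := intZ s^-1 i2; have jc := intZ 2 ic.
rewrite /corr /M2 -(Rint_fst hc msq p1) -(Rint_snd hc msq p2).
rewrite -!RintegralZl //.
rewrite -RintegralD //.
apply: le_Rintegral => //; first exact: intD.
by move=> z _; exact: amgm.
Qed.


Lemma m0pair : measurable_fun [set: T] (fun y : T => ((0 : T), y) : T2).
Proof. exact: measurable_fun_pair. Qed.

Lemma mkint (m : V) : measurable_fun [set: T2]
  (fun z : T2 => dotp ((z.1 : V) - m) ((z.2 : V) - z.1)).
Proof.
apply: mrow_dotp; apply: mrowB; [exact: mrow_fst|exact: mrow_cst|exact: mrow_snd|exact: mrow_fst].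
Qed.

Lemma probA (dX : measure_display) (X : measurableType dX) (P : probability X R) (S : set X) (b : bool) :
  (b -> S = setT) -> (~~ b -> S = set0) -> P S = (b%:R)%:E.
Proof.
by case: b => [h1 _|_ h2]; [rewrite h1 // probability_setT|rewrite h2 // measure0].
Qed.

Section Delta.
Variables (mu nu : probability T R).
Hypotheses (p1 : P2 mu) (p2 : P2 nu).
Definition rho0 := pushP mu (mdil 0).
Definition gam0 := pushP nu m0pair.

Lemma rho0_push : is_push (dil 0) mu rho0.
Proof. exact: pushP_is. Qed.

Lemma rho0_delta : is_delta0 rho0.
Proof.
move=> A mA; rewrite rho0_push // diracE.
apply: probA => [/set_mem h|h]; apply/seteqP; split => x //=.
- by rewrite /dil scale0r.
- by rewrite /dil scale0r => /mem_set; rewrite (negbTE h).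
Qed.


Lemma rho0_P2 : P2 rho0.
Proof. exact: dil_P2 p1 rho0_push. Qed.

Lemma rho0_mean : mean rho0 = 0.
Proof. by rewrite (dil_mean p1 rho0_push) scale0r. Qed.

Lemma rho0_Var : Var rho0 = 0.
Proof. by rewrite (dil_Var p1 rho0_push) expr0n mul0r. Qed.

Lemma gam0_coupling : coupling rho0 nu gam0.
Proof.
move=> A mA; split.
- rewrite (@pushP_is _ _ _ _ _ nu _ m0pair _ (measurableX mA measurableT)).
  rewrite rho0_push //.
  transitivity (((0 : T) \in A)%:R%:E : \bar R).
    apply: probA => [/set_mem h|h]; apply/seteqP; split => x //=.
    by move=> [/mem_set]; rewrite (negbTE h).
  symmetry; apply: probA => [/set_mem h|h]; apply/seteqP; split => x //=.
  - by rewrite /dil scale0r.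
  - by rewrite /dil scale0r => /mem_set; rewrite (negbTE h).
- rewrite (@pushP_is _ _ _ _ _ nu _ m0pair _ (measurableX measurableT mA)).
  by congr (nu _); apply/seteqP; split => x //= [].
Qed.


Lemma gam0_push : is_push2 (fun z : T2 => z) gam0 gam0.
Proof. by move=> A mA; rewrite preimage_id. Qed.

Lemma gam0_corr : corr gam0 = 0.
Proof.
rewrite /corr (push_Rint m0pair (@pushP_is _ _ _ _ _ nu _ m0pair) mdot12).
  by rewrite -(Rint_cst nu 0); apply: eq_Rintegral => y _ /=; rewrite dotp0l.
by apply: intE (finite_measure_integrable_cst _ 0 measurableT) _ => y /=; rewrite dotp0l.
Qed.

Lemma rho0_Kdom : mean nu = 0 -> Kdom rho0 nu.
Proof.
move=> m0; exists gam0; split; first exact: gam0_coupling.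
rewrite (push_Rint m0pair (@pushP_is _ _ _ _ _ nu _ m0pair) (mkint _)).
  by rewrite -(Rint_cst nu 0); apply: eq_Rintegral => y _ /=; rewrite m0 subr0 dotp0l.
by apply: intE (finite_measure_integrable_cst _ 0 measurableT) _ => y /=; rewrite m0 subr0 dotp0l.
Qed.

End Delta.

End Main.


Section Prob.
Variables (R : realType) (d : nat).
Local Notation T := (Rd R d).
Local Notation T2 := (T * T)%type.
Local Notation V := ('rV[R]_d).
Implicit Types (mu rho : probability T R) (pi gam : probability T2 R).
Variables (nu : probability T R) (D : set (probability T R)).
Hypotheses (hnu : P20 nu) (hD0 : D !=set0) (hDP : forall mu, D mu -> P2 mu)
  (hcone : is_cone D) (htr : transl_invariant D).

Let p2nu : P2 nu. Proof. by case: hnu. Qed.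
Let m0nu : mean nu = 0. Proof. by case: hnu. Qed.

Lemma Var_ge0 mu : 0 <= Var mu.
Proof. by apply: Rintegral_ge0 => x _; exact: sqnorm_ge0. Qed.

Lemma M2_ge0 mu : 0 <= M2 mu.
Proof. by apply: Rintegral_ge0 => x _; exact: sqnorm_ge0. Qed.

Lemma P1_ub mu pi : feasible1 D nu mu pi -> ((corr pi)%:E <= P1 D nu)%E.
Proof. by move=> hf; apply: ereal_sup_ubound; exists pi => //; exists mu. Qed.

Lemma exists_rho0 : exists mu0, D mu0.
Proof. by case: hD0 => mu0 h; exists mu0. Qed.

Lemma rho0_D mu0 : D mu0 -> D (rho0 mu0).
Proof. by move=> h; apply: (hcone h (lexx 0)); exact: rho0_push. Qed.

Lemma rho0_feas mu0 : D mu0 -> feasible1 D nu (rho0 mu0) (gam0 nu).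
Proof.
move=> h; have p := hDP h; split; first exact: rho0_D.
split; first by split; [exact: rho0_P2|exact: rho0_mean].
split; first exact: gam0_coupling.
by rewrite rho0_Var.
Qed.

Lemma P1_ge0 : (0 <= P1 D nu)%E.
Proof.
have [mu0 h] := exists_rho0; have := P1_ub (rho0_feas h); by rewrite gam0_corr.
Qed.


Lemma upperA mu : D mu -> MK nu mu -> 0 < Var mu ->
  (((Var mu + sqnorm (mean mu)) / Num.sqrt (Var mu))%:E <= P1 D nu)%E.
Proof.
move=> Dm [p2 [piK [hc hk]]].
set v := Var mu; set m := mean mu => v0.
have ecorr : corr piK = v + sqnorm m.
  move: hk; rewrite (kint hc p2 p2nu m0nu) => /eqP; rewrite subr_eq0 => /eqP ->.
  by rewrite /v Var_M2 // subrK.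
pose mu1 := pushP mu (mtransl (- m)).
pose pi1 := pushP piK (mpairf (mtransl (- m))).
have h1 : is_push (transl (- m)) mu mu1 by exact: pushP_is.
have g1 : is_push2 (fun z : T2 => (transl (- m) z.1, z.2)) piK pi1 by exact: pushP_is.
have c1 : coupling mu1 nu pi1 := couple_push (mtransl (- m)) hc h1 g1.
have D1 : D mu1 := htr Dm h1.
have p21 : P2 mu1 := transl_P2 p2 h1.
have mn1 : mean mu1 = 0 by rewrite (transl_mean p2 h1) subrr.
have v1 : Var mu1 = v := transl_Var p2 h1.
have corr1 : corr pi1 = corr piK.
  by rewrite (corr_transl hc p2 p2nu g1) m0nu dotp0r addr0.
set s := (Num.sqrt v)^-1.
pose mu2 := pushP mu1 (mdil s).
pose pi2 := pushP pi1 (mpairf (mdil s)).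
have h2 : is_push (dil s) mu1 mu2 by exact: pushP_is.
have g2 : is_push2 (fun z : T2 => (dil s z.1, z.2)) pi1 pi2 by exact: pushP_is.
have c2 : coupling mu2 nu pi2 := couple_push (mdil s) c1 h2 g2.
have s0 : 0 <= s by rewrite invr_ge0 sqrtr_ge0.
have D2 : D mu2 := hcone D1 s0 h2.
have f2 : feasible1 D nu mu2 pi2.
  split => //; split; first split.
  - exact: dil_P2 p21 h2.
  - by rewrite (dil_mean p21 h2) mn1 scaler0.
  split => //; rewrite (dil_Var p21 h2) v1 /s exprVn sqr_sqrtr ?mulVf //.
    by rewrite lt0r_neq0.
  exact: ltW.
have := P1_ub f2; rewrite (corr_dil c1 p21 p2nu g2) corr1 ecorr mulrC.
by [].
Qed.


Lemma M2_Var mu : P2 mu -> M2 mu = Var mu + sqnorm (mean mu).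
Proof. by move=> p; rewrite Var_M2 // subrK. Qed.

Lemma sqnorm0 : sqnorm (0 : V) = 0.
Proof. by rewrite /sqnorm dotp0l. Qed.

Lemma lowerB mu pi : feasible1 D nu mu pi -> 0 < corr pi ->
  exists rho, (D `&` MK nu) rho /\ (corr pi) ^+ 2 <= Var rho.
Proof.
move=> [Dm [[p2 mn0] [hc vle1]]] c0.
set c := corr pi in c0 *; set w := Var mu in vle1.
have M2w : M2 mu = w by rewrite M2_Var // mn0 sqnorm0 addr0.
have [w0|wpos] : w = 0 \/ 0 < w.
  by have := Var_ge0 mu; rewrite le0r => /orP[/eqP h|h]; [left|right].
- exfalso.
  set a := M2 nu; have a0 : 0 <= a := M2_ge0 nu.
  have ac0 : 0 < a + c by rewrite ltr_wpDl.
  have s0 : 0 < (a + c) / c by rewrite divr_gt0.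
  have := corr_amgm hc p2 p2nu s0; rewrite M2w w0 mulr0 add0r invf_div.
  have : c / (a + c) * a <= c.
    rewrite mulrAC ler_pdivrMr //; nra.
  move: c0; rewrite -/c; set X := c / (a + c) * a; lra.
set t := c / w.
have t0 : 0 <= t by rewrite divr_ge0 // ltW.
pose rho := pushP mu (mdil t).
pose gam := pushP pi (mpairf (mdil t)).
have h : is_push (dil t) mu rho by exact: pushP_is.
have g : is_push2 (fun z : T2 => (dil t z.1, z.2)) pi gam by exact: pushP_is.
have cg : coupling rho nu gam := couple_push (mdil t) hc h g.
have p2r : P2 rho := dil_P2 p2 h.
have vr : Var rho = t ^+ 2 * w := dil_Var p2 h.
have mr : mean rho = 0 by rewrite (dil_mean p2 h) mn0 scaler0.
exists rho; split; first split.
- by have := hcone Dm t0 h.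
- split => //; exists gam; split => //.
  rewrite (kint cg p2r p2nu m0nu) (corr_dil hc p2 p2nu g) M2_Var // vr mr sqnorm0 addr0.
  rewrite -/c /t; field; exact: lt0r_neq0.
- rewrite vr /t.
  have -> : (c / w) ^+ 2 * w = c ^+ 2 / w by field; exact: lt0r_neq0.
  rewrite ler_pdivlMr // ler_piMr //; exact: sqr_ge0.
Qed.

End Prob.


Section Prob2.
Variables (R : realType) (d : nat).
Local Notation T := (Rd R d).
Local Notation T2 := (T * T)%type.
Local Notation V := ('rV[R]_d).
Implicit Types (mu rho : probability T R) (pi gam : probability T2 R).
Variables (nu : probability T R) (D : set (probability T R)).
Hypotheses (hnu : P20 nu) (hD0 : D !=set0) (hDP : forall mu, D mu -> P2 mu)
  (hcone : is_cone D) (htr : transl_invariant D).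

Let p2nu : P2 nu. Proof. by case: hnu. Qed.
Let m0nu : mean nu = 0. Proof. by case: hnu. Qed.

Lemma var0_corr mu pi : feasible1 D nu mu pi -> Var mu = 0 -> corr pi <= 0.
Proof.
move=> [Dm [[p2 mn0] [hc vle1]]] w0; rewrite leNgt; apply/negP => c0.
set c := corr pi in c0 *.
have M2w : M2 mu = 0 by rewrite M2_Var // mn0 sqnorm0 addr0.
set a := M2 nu; have a0 : 0 <= a := M2_ge0 nu.
have ac0 : 0 < a + c by rewrite ltr_wpDl.
have s0 : 0 < (a + c) / c by rewrite divr_gt0.
have := corr_amgm hc p2 p2nu s0; rewrite M2w mulr0 add0r invf_div.
have : c / (a + c) * a <= c.
  rewrite mulrAC ler_pdivrMr //; nra.
move: c0; rewrite -/c; set X := c / (a + c) * a; lra.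
Qed.

Lemma scale_MK mu pi t : feasible1 D nu mu pi -> 0 <= t ->
  t * corr pi = t ^+ 2 * Var mu ->
  let rho := pushP mu (mdil t) in
  (D `&` MK nu) rho /\ Var rho = t ^+ 2 * Var mu /\
  exists gam, coupling rho nu gam /\ corr gam = t * corr pi.
Proof.
move=> [Dm [[p2 mn0] [hc vle1]]] t0 ht rho.
pose gam := pushP pi (mpairf (mdil t)).
have h : is_push (dil t) mu rho by exact: pushP_is.
have g : is_push2 (fun z : T2 => (dil t z.1, z.2)) pi gam by exact: pushP_is.
have cg : coupling rho nu gam := couple_push (mdil t) hc h g.
have p2r : P2 rho := dil_P2 p2 h.
have vr : Var rho = t ^+ 2 * Var mu := dil_Var p2 h.
have mr : mean rho = 0 by rewrite (dil_mean p2 h) mn0 scaler0.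
have cgam : corr gam = t * corr pi := corr_dil hc p2 p2nu g.
split; last by split => //; exists gam.
split; first by have := hcone Dm t0 h.
split => //; exists gam; split => //.
by rewrite (kint cg p2r p2nu m0nu) cgam M2_Var // vr mr sqnorm0 addr0 ht subrr.
Qed.

Lemma lowerB' mu pi : feasible1 D nu mu pi -> 0 < corr pi -> 0 < Var mu ->
  exists rho, (D `&` MK nu) rho /\ (corr pi) ^+ 2 / Var mu <= Var rho.
Proof.
move=> hf c0 w0; set c := corr pi in c0 *; set w := Var mu in w0 *.
have t0 : 0 <= c / w by rewrite divr_ge0 // ltW.
have ht : c / w * corr pi = (c / w) ^+ 2 * Var mu.
  rewrite -/c -/w; field; exact: lt0r_neq0.
have /= [hm [hv _]] := scale_MK hf t0 ht.
exists (pushP mu (mdil (c / w))); split => //; rewrite hv -/w.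
by rewrite le_eqVlt; apply/orP; left; apply/eqP; field; exact: lt0r_neq0.
Qed.

Lemma lowerB2 mu pi : feasible1 D nu mu pi -> 0 < corr pi ->
  exists rho, (D `&` MK nu) rho /\ (corr pi) ^+ 2 <= Var rho.
Proof.
move=> hf c0; have w0 : 0 < Var mu.
  rewrite lt0r Var_ge0 andbT; apply/eqP => w0.
  by have := var0_corr hf w0; rewrite leNgt c0.
have [rho [hr hv]] := lowerB' hf c0 w0; exists rho; split => //.
apply: le_trans hv; rewrite ler_pdivlMr // ler_piMr //; first exact: sqr_ge0.
by case: hf => _ [_ [_ ]].
Qed.

End Prob2.


Section Prob3.
Variables (R : realType) (d : nat).
Local Notation T := (Rd R d).
Local Notation T2 := (T * T)%type.
Local Notation V := ('rV[R]_d).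
Implicit Types (mu rho : probability T R) (pi gam : probability T2 R).
Variables (nu : probability T R) (D : set (probability T R)).
Hypotheses (hnu : P20 nu) (hD0 : D !=set0) (hDP : forall mu, D mu -> P2 mu)
  (hcone : is_cone D) (htr : transl_invariant D).

Lemma sqrt_le_P1 mu : (D `&` MK nu) mu -> 0 < Var mu ->
  ((Num.sqrt (Var mu))%:E <= P1 D nu)%E.
Proof.
move=> [Dm hm] v0; apply: le_trans (upperA hnu hcone htr Dm hm v0).
have s0 : 0 < Num.sqrt (Var mu) by rewrite sqrtr_gt0.
rewrite lee_fin ler_pdivlMr // -expr2 sqr_sqrtr; last exact: ltW.
have := sqnorm_ge0 (mean mu); lra.
Qed.

Lemma P1_le_sqrt rho : maxVar D nu rho -> (P1 D nu <= (Num.sqrt (Var rho))%:E)%E.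
Proof.
move=> [hr hmax]; apply: ge_ereal_sup => _ [pi [mu hf] <-].
case: (lerP (corr pi) 0) => c0.
  by rewrite lee_fin (le_trans c0) // sqrtr_ge0.
have [rho' [hr' hv]] := lowerB2 hnu hcone hf c0.
rewrite lee_fin -(ger0_norm (ltW c0)) -sqrtr_sqr ler_wsqrtr //.
exact: le_trans hv (hmax _ hr').
Qed.

Lemma P1_pos_feas : (0 < P1 D nu)%E ->
  exists mu pi, feasible1 D nu mu pi /\ 0 < corr pi.
Proof.
move=> /ereal_sup_gt [_ [pi [mu hf] <-]]; rewrite lte_fin => c0.
by exists mu, pi.
Qed.

Lemma Var_le0 mu : P1 D nu = 0%E -> (D `&` MK nu) mu -> Var mu <= 0.
Proof.
move=> h0 hm; rewrite leNgt; apply/negP => v0.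
have := sqrt_le_P1 hm v0; rewrite h0 lee_fin leNgt sqrtr_gt0 v0.
by [].
Qed.

End Prob3.

Unset Implicit Arguments.
Theorem mainTheorem20 (R : realType) (d : nat)
    (nu : probability (Rd R d) R) (D : set (probability (Rd R d) R)) :
  P20 nu ->
  D !=set0 -> (forall mu, D mu -> P2 mu) ->
  is_cone D -> transl_invariant D ->
  ((0 < P1 D nu)%E ->
    (* (a) *)
    (forall muh pih, attainsP1 D nu muh pih ->
       Var muh = 1 /\
       exists rho, is_push (dil (fine (P1 D nu))) muh rho /\ maxVar D nu rho)
    /\
    (* (b) *)
    (forall muc pic, maxVar D nu muc -> ~ is_delta0 muc ->
       coupling muc nu pic ->
       (forall pi, coupling muc nu pi -> corr pi <= corr pic) ->
       let lam := (Num.sqrt (Var muc))^-1 in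
       exists rho gam,
         is_push (dil lam) muc rho /\
         is_push2 (fun z : Rd R d * Rd R d => (dil lam z.1, z.2)) pic gam /\
         attainsP1 D nu rho gam))
  /\
  (P1 D nu = 0%E <->
     ereal_sup [set (Var mu)%:E | mu in D `&` MK nu] = 0%E)
  /\
  (P1 D nu = 0%E ->
     exists rho, is_delta0 rho /\ maxVar D nu rho).
Proof.
move=> hnu hD0 hDP hcone htr.
have p2nu : P2 nu by case: hnu.
have m0nu : mean nu = 0 by case: hnu.
have [mu0 Dmu0] : exists mu0, D mu0 by case: hD0 => m h; exists m.
have p2mu0 := hDP _ Dmu0.
have r0 : (D `&` MK nu) (rho0 mu0).
  split; first exact: (rho0_D hcone Dmu0).
  split; [exact: rho0_P2|exact: rho0_Kdom].
have rV0 : Var (rho0 mu0) = 0 by exact: rho0_Var.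
split; [|split].
- move=> P1pos; split.
  +
    move=> muh pih [hf hatt].
    set c := corr pih in hatt *.
    have c0 : 0 < c by rewrite -lte_fin hatt.
    have fP : fine (P1 D nu) = c by rewrite -hatt.
    have vle1 : Var muh <= 1 by case: hf => _ [_ [_ ]].
    have w0 : 0 < Var muh.
      rewrite lt0r Var_ge0 andbT; apply/eqP => w0.
      by have := var0_corr hnu hf w0; rewrite leNgt c0.
    have hv1 : Var muh = 1.
      apply: le_anti; rewrite vle1 /= leNgt; apply/negP => vlt1.
      have [rho [hr hv]] := lowerB' hnu hcone hf c0 w0.
      have hc2 : c ^+ 2 < Var rho.
        apply: lt_le_trans hv; rewrite ltr_pdivlMr //.
        have : 0 < c ^+ 2 by rewrite exprn_gt0.
        set C := c ^+ 2; nra.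
      have vr0 : 0 < Var rho by apply: le_lt_trans hc2; exact: sqr_ge0.
      have := sqrt_le_P1 hnu hcone htr hr vr0; rewrite -hatt lee_fin => hs.
      have s0 := sqrtr_ge0 (Var rho); have ss := sqr_sqrtr (ltW vr0).
      move: hc2; rewrite -ss; set s := Num.sqrt (Var rho) in hs s0 *; nra.
    split => //.
    exists (pushP muh (mdil c)); rewrite fP; split; first exact: pushP_is.
    have ht : c * corr pih = c ^+ 2 * Var muh by rewrite hv1 mulr1 expr2.
    have /= [hm [hv _]] := scale_MK hnu hcone hf (ltW c0) ht.
    split => // mu hmu.
    rewrite hv hv1 mulr1.
    case: (lerP (Var mu) 0) => v0; first by apply: le_trans v0 (sqr_ge0 c).
    have := sqrt_le_P1 hnu hcone htr hmu v0; rewrite -hatt lee_fin => hs.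
    have s0 := sqrtr_ge0 (Var mu); have ss := sqr_sqrtr (ltW v0).
    rewrite -ss; set s := Num.sqrt (Var mu) in hs s0 *; nra.
  +
    move=> muc pic hmax _ hcpl hopt lam.
    have [[hDm hMK] hmx] := hmax.
    have [p2c [piK [hK hk]]] := hMK.
    set v := Var muc in lam hmx *.
    have [mu [pi [hf c0]]] := P1_pos_feas P1pos.
    have [rho [hr hv]] := lowerB2 hnu hcone hf c0.
    have v0 : 0 < v.
      by apply: lt_le_trans (le_trans hv (hmx _ hr)); rewrite exprn_gt0.
    have hup := upperA hnu hcone htr hDm hMK v0.
    have hlo := P1_le_sqrt hnu hcone hmax.
    have s0 : 0 < Num.sqrt v by rewrite sqrtr_gt0.
    have ss : Num.sqrt v ^+ 2 = v by rewrite sqr_sqrtr // ltW.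
    have key := le_trans hup hlo; rewrite lee_fin -/v ler_pdivrMr // -expr2 ss in key.
    have m0 : mean muc = 0.
      apply: sqnorm_eq0; apply: le_anti; rewrite sqnorm_ge0 andbT; lra.
    have P1eq : P1 D nu = (Num.sqrt v)%:E.
      apply: le_anti; rewrite hlo /=; apply: le_trans hup.
      by rewrite m0 sqnorm0 addr0 lee_fin -/v ler_pdivlMr // -expr2 ss.
    have lam0 : 0 <= lam by rewrite invr_ge0 ltW.
    pose rho2 := pushP muc (mdil lam).
    pose gam := pushP pic (mpairf (mdil lam)).
    have h : is_push (dil lam) muc rho2 by exact: pushP_is.
    have g : is_push2 (fun z : (Rd R d * Rd R d)%type => (dil lam z.1, z.2)) pic gam by exact: pushP_is.
    exists rho2, gam; split => //; split => //.
    have cg : coupling rho2 nu gam := couple_push (mdil lam) hcpl h g.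
    have hf2 : feasible1 D nu rho2 gam.
      split; first by have := hcone _ _ hDm _ lam0 h.
      split; first split.
      - exact: dil_P2 p2c h.
      - by rewrite (dil_mean p2c h) m0 scaler0.
      split => //; rewrite (dil_Var p2c h) -/v /lam exprVn ss mulVf //.
      exact: lt0r_neq0.
    split => //; apply: le_anti; rewrite (P1_ub hf2) /= P1eq lee_fin.
    rewrite (corr_dil hcpl p2c p2nu g).
    have cK : corr piK = v.
      move: hk; rewrite (kint hK p2c p2nu m0nu) => /eqP; rewrite subr_eq0 => /eqP ->.
      by rewrite M2_Var // m0 sqnorm0 addr0.
    have := hopt _ hK; rewrite cK => hvle.
    apply: le_trans (ler_wpM2l lam0 hvle).
    have E : (Num.sqrt v)^-1 * v = Num.sqrt v.
      by rewrite -[X in _ * X]ss; field; exact: lt0r_neq0.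
    by rewrite /lam E.
- split => [h0|hs].
  + apply: le_anti; apply/andP; split.
    * apply: ge_ereal_sup => _ [mu hm <-]; rewrite lee_fin.
      have := Var_le0 hnu hcone htr h0 hm. done.
    * by apply: ereal_sup_ubound; exists (rho0 mu0) => //; rewrite rV0.
  + have := P1_ge0 nu hD0 hDP hcone; rewrite le_eqVlt => /orP[/eqP <-//|P1pos].
    have [mu [pi [hf c0]]] := P1_pos_feas P1pos.
    have [rho [hr hv]] := lowerB2 hnu hcone hf c0.
    have : ((Var rho)%:E <= 0)%E by rewrite -hs; apply: ereal_sup_ubound; exists rho.
    rewrite lee_fin => hv0; have h2 : 0 < corr pi ^+ 2 by rewrite exprn_gt0.
    by have := lt_le_trans h2 (le_trans hv hv0); rewrite ltxx.
- move=> h0; exists (rho0 mu0); split; first exact: rho0_delta.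
  split => // mu hm; rewrite rV0; by have := Var_le0 hnu hcone htr h0 hm.
Qed.
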